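(* Let $K$ be a field, $\kappa$ an infinite cardinal, and $\mathcal R=(R_\alpha\mid\alpha<\kappa)$ a sequence of $K$-algebras each of which possesses a multiplicative basis. Then $R=R(\kappa,K,\mathcal R)$ has a multiplicative basis. If moreover $R_0$ has a strong multiplicative basis containing a non-zero idempotent, then $R$ has a strong multiplicative basis.
   Context: $R(\kappa,K,\mathcal R)$ denotes the $K$-subalgebra $I\oplus1_P\cdot K$ of $P=\prod_{\alpha<\kappa}R_\alpha$, where $I=\bigoplus_{\alpha<\kappa}R_\alpha$. A $K$-linear basis $B$ of a $K$-algebra is multiplicative if for all $b,b'\in B$ either $bb'=0$ or $bb'\in B$, and strong multiplicative if $bb'\in B$ for all $b,b'\in B$. *)

(* Defs.v *)
From Stdlib Require List.
From HB Require Import structures.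
From mathcomp Require Import all_boot all_algebra.
Set Implicit Arguments.
Unset Strict Implicit.
Unset Printing Implicit Defensive.
Import GRing.Theory.
Local Open Scope ring_scope.

(* Associative unital K-algebras (the zero algebra is allowed, hence we do
   not use MathComp's algType, which requires 1 != 0). *)
Record kalgebra (K : fieldType) := KAlgebra {
  ka_sort :> lmodType K;
  ka_mul : ka_sort -> ka_sort -> ka_sort;
  ka_one : ka_sort;
  ka_mulA : forall x y z, ka_mul x (ka_mul y z) = ka_mul (ka_mul x y) z;
  ka_mul1l : forall x, ka_mul ka_one x = x;
  ka_mul1r : forall x, ka_mul x ka_one = x;
  ka_mulDl : forall x y z, ka_mul (x + y) z = ka_mul x z + ka_mul y z;
  ka_mulDr : forall x y z, ka_mul x (y + z) = ka_mul x y + ka_mul x z;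
  ka_scalerAl : forall (a : K) x y, a *: ka_mul x y = ka_mul (a *: x) y;
  ka_scalerAr : forall (a : K) x y, a *: ka_mul x y = ka_mul x (a *: y)
}.

Section Bases.
Variables (K : fieldType) (V : Type).
Variables (zero : V) (add : V -> V -> V) (scale : K -> V -> V)
          (mul : V -> V -> V).

Definition lincomb (l : seq (K * V)) : V :=
  foldr (fun p acc => add (scale p.1 p.2) acc) zero l.

Definition is_basis_of (S B : V -> Prop) : Prop :=
  [/\ (forall b, B b -> S b),
      (forall l : seq (K * V), List.NoDup (map snd l) ->
         (forall p, List.In p l -> B p.2) ->
         lincomb l = zero -> forall p, List.In p l -> p.1 = 0)
    & (forall x, S x -> exists l : seq (K * V),
         (forall p, List.In p l -> B p.2) /\ x = lincomb l)].

Definition is_multiplicative_basis_of (S B : V -> Prop) : Prop :=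
  is_basis_of S B /\
  forall b b', B b -> B b' -> mul b b' = zero \/ B (mul b b').

Definition is_strong_multiplicative_basis_of (S B : V -> Prop) : Prop :=
  is_basis_of S B /\ forall b b', B b -> B b' -> B (mul b b').
End Bases.

Definition has_mult_basis (K : fieldType) (A : kalgebra K) : Prop :=
  exists B : A -> Prop,
    is_multiplicative_basis_of 0 +%R *:%R (@ka_mul K A) (fun _ => True) B.

Definition has_strong_mult_basis (K : fieldType) (A : kalgebra K) : Prop :=
  exists B : A -> Prop,
    is_strong_multiplicative_basis_of 0 +%R *:%R (@ka_mul K A) (fun _ => True) B.

Section Product.
Variables (K : fieldType) (I : Type) (A : I -> kalgebra K).
Definition Pt := forall i, A i.
Definition P0 : Pt := fun i => 0.
Definition P1 : Pt := fun i => ka_one (A i).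
Definition Padd (x y : Pt) : Pt := fun i => x i + y i.
Definition Pscale (a : K) (x : Pt) : Pt := fun i => a *: x i.
Definition Pmul (x y : Pt) : Pt := fun i => ka_mul (x i) (y i).

(* membership in I = (+)_i R_i : finite support *)
Definition in_dsum (x : Pt) : Prop :=
  exists s : seq I, forall i, ~ List.In i s -> x i = 0.

(* membership in R(kappa,K,R) = I (+) K.1_P *)
Definition in_Rk (x : Pt) : Prop :=
  exists (y : Pt) (c : K), in_dsum y /\ x = Padd y (Pscale c P1).

Definition Rk_has_mult_basis : Prop :=
  exists B : Pt -> Prop, is_multiplicative_basis_of P0 Padd Pscale Pmul in_Rk B.

Definition Rk_has_strong_mult_basis : Prop :=
  exists B : Pt -> Prop,
    is_strong_multiplicative_basis_of P0 Padd Pscale Pmul in_Rk B.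
End Product.

Definition infinite_type (I : Type) : Prop :=
  forall s : seq I, exists i, ~ List.In i s.

(* Main.v *)
Require Import Defs.
From mathcomp Require Import all_boot all_algebra.
From Stdlib Require Import ClassicalEpsilon Eqdep FunctionalExtensionality.
From mathcomp Require Import ring.
Import GRing.Theory.
Local Open Scope ring_scope.

Lemma inmapP (T1 T2 : Type) (f : T1 -> T2) (l : seq T1) y :
  List.In y (map f l) -> exists x, f x = y /\ List.In x l.
Proof.
elim: l => [|a l IH] //= [<-|h]; first by exists a; split; [|left].
by have [x [? ?]] := IH h; exists x; split; [|right].
Qed.

Lemma inmap (T1 T2 : Type) (f : T1 -> T2) (l : seq T1) x :
  List.In x l -> List.In (f x) (map f l).
Proof. elim: l => [|a l IH] //= [->|h]; [by left | by right; apply: IH]. Qed.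

Lemma ac4 (V:zmodType) (a x y c : V) : a + ((x + y) + c) = y + (a + (x + c)).
Proof. by rewrite !addrA; congr (_ + _); rewrite addrC addrA. Qed.

Lemma incat (T : Type) (x : T) l1 l2 :
  List.In x (l1 ++ l2) <-> List.In x l1 \/ List.In x l2.
Proof.
elim: l1 => [|a l IH] /=; first by split; [right|case].
by rewrite IH; split; [case=> [->|[?|?]]; [left;left|left;right|right]
  | case=> [[->|?]|?]; [left|right;left|right;right]].
Qed.

Lemma insplit (T : Type) (x : T) l : List.In x l -> exists l1 l2, l = l1 ++ x :: l2.
Proof.
elim: l => [|a l IH] //= [->|h]; first by exists [::], l.
by have [l1 [l2 ->]] := IH h; exists (a :: l1), l2.
Qed.

Arguments insplit {T x l} _.
Arguments incat {T x l1 l2}.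
Arguments inmapP {T1 T2 f l y} _.
Arguments inmap {T1 T2} f {l x} _.

Section Abs.
Variables (K : fieldType) (V : Type) (zero : V) (add : V -> V -> V)
  (scale : K -> V -> V).
Local Notation lc := (lincomb zero add scale).

Lemma lc_cat (addA : forall x y z, add x (add y z) = add (add x y) z)
  (add0 : forall x, add zero x = x) l1 l2 :
  lc (l1 ++ l2) = add (lc l1) (lc l2).
Proof. by elim: l1 => [|p l IH] /=; [rewrite add0 | rewrite IH addA]. Qed.

Lemma lc_scale
  (scaleD : forall k x y, scale k (add x y) = add (scale k x) (scale k y))
  (scaleM : forall a b x, scale (a * b) x = scale a (scale b x))
  (scale0 : forall k, scale k zero = zero) k l :
  lc (map (fun p => (k * p.1, p.2)) l) = scale k (lc l).
Proof. by elim: l => [|p l IH] /=; [rewrite scale0 | rewrite IH scaleD scaleM]. Qed.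

Definition fsum (psi : V -> K) (l : seq (K * V)) :=
  foldr (fun q acc => q.1 * psi q.2 + acc) 0 l.

Lemma pick (psi : V -> K) l p : List.NoDup (map snd l) -> List.In p l ->
  psi p.2 = 1 -> (forall q, List.In q l -> q.2 <> p.2 -> q.1 * psi q.2 = 0) ->
  fsum psi l = p.1.
Proof.
elim: l => [|q l IH] //= Hnd Hin H1 Hq.
have Hnd' : List.NoDup (map snd l) by inversion Hnd.
have Hnq : ~ List.In q.2 (map snd l) by inversion Hnd.
have H0 : forall r, List.In r l -> r.2 <> p.2 -> r.1 * psi r.2 = 0.
  by move=> r hr; apply: Hq; right.
case: Hin => [Eq|Hin].
  subst q; rewrite H1 mulr1.
  suff -> : fsum psi l = 0 by rewrite addr0.
  elim: l Hnd' Hnq H0 {IH Hnd Hq} => [|r l IH2] //= Hnd Hnq H0.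
  have -> : r.1 * psi r.2 = 0.
    by apply: H0; [left | move=> e; apply: Hnq; left].
  rewrite add0r IH2 //; first by inversion Hnd.
    by move=> h; apply: Hnq; right.
  by move=> r' hr; apply: H0; right.
have -> : q.1 * psi q.2 = 0.
  by apply: Hq; [left | move=> e; apply: Hnq; rewrite e; exact: (inmap snd Hin)].
by rewrite add0r IH.
Qed.

Lemma indep_crit (S : V -> Prop) (psi : V -> K) l p :
  S zero -> (forall x y, S x -> S y -> S (add x y)) ->
  (forall k x, S x -> S (scale k x)) -> psi zero = 0 ->
  (forall x y, S x -> S y -> psi (add x y) = psi x + psi y) ->
  (forall k x, S x -> psi (scale k x) = k * psi x) ->
  (forall q, List.In q l -> S q.2) -> lc l = zero ->
  List.NoDup (map snd l) -> List.In p l -> psi p.2 = 1 ->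
  (forall q, List.In q l -> q.2 <> p.2 -> q.1 * psi q.2 = 0) -> p.1 = 0.
Proof.
move=> S0 SD SZ p0 pD pZ Hl Hz Hnd Hin H1 Hq.
have : S (lc l) /\ psi (lc l) = fsum psi l.
  elim: l Hl {Hz Hnd Hin Hq} => [|q l IH] Hl /=; first by [].
  have [IH1 IH2] := IH (fun r hr => Hl r (or_intror hr)).
  have Sq : S q.2 by apply: Hl; left.
  split; first by apply: SD => //; apply: SZ.
  by rewrite pD ?pZ ?IH2 //; apply: SZ.
rewrite Hz p0 => -[_ /esym E].
by rewrite -(@pick psi l p Hnd Hin H1 Hq) E.
Qed.
End Abs.

Section Coord.
Variables (K : fieldType) (V : lmodType K) (B : V -> Prop).
Local Notation lc := (@lincomb K V 0 +%R *:%R).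
Hypothesis Hind : forall l : seq (K * V), List.NoDup (map snd l) ->
         (forall p, List.In p l -> B p.2) ->
         lc l = 0 -> forall p, List.In p l -> p.1 = 0.
Hypothesis Hspan : forall x : V, exists l : seq (K * V),
         (forall p, List.In p l -> B p.2) /\ x = lc l.

Lemma lcV_cat l1 l2 : lc (l1 ++ l2) = lc l1 + lc l2.
Proof. by apply: lc_cat; [move=> *; rewrite addrA | move=> *; rewrite add0r]. Qed.
Lemma lcV_scale k l : lc (map (fun p => (k * p.1, p.2)) l) = k *: lc l.
Proof.
by apply: lc_scale; [move=> *; rewrite scalerDr | move=> *; rewrite scalerA
  | move=> *; rewrite scaler0].
Qed.

Definition coef (b : V) (l : seq (K * V)) : K :=
  foldr (fun p acc => (if excluded_middle_informative (p.2 = b) then p.1 else 0) + acc) 0 l.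

Lemma coef_cat b l1 l2 : coef b (l1 ++ l2) = coef b l1 + coef b l2.
Proof. by elim: l1 => [|p l IH] /=; [rewrite add0r | rewrite IH addrA]. Qed.

Lemma coef_scale b k l : coef b (map (fun p => (k * p.1, p.2)) l) = k * coef b l.
Proof.
elim: l => [|p l IH] /=; first by rewrite mulr0.
by rewrite IH mulrDr; case: excluded_middle_informative => ?; rewrite ?mulr0.
Qed.

Lemma normalize l : (forall p, List.In p l -> B p.2) -> exists n,
  (forall p, List.In p n -> B p.2) /\ List.NoDup (map snd n) /\
  lc n = lc l /\ forall b, coef b n = coef b l.
Proof.
elim: l => [|q l IH] Hl.
  by exists [::]; split=> //; split=> //; constructor.
have [n [Hn [Hnd [Hlc Hc]]]] := IH (fun p hp => Hl p (or_intror hp)).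
have Bq : B q.2 by apply: Hl; left.
case: (classic (List.In q.2 (map snd n))) => Hq.
  have [p [Ep Hp]] := inmapP Hq.
  have [n1 [n2 En]] := insplit Hp.
  exists (n1 ++ (p.1 + q.1, p.2) :: n2); split; last split; last split.
  - move=> r hr0; case: (proj1 incat hr0) => [hr|[<-|hr]]; first 2 last.
    + by apply: Hn; rewrite En; apply/incat; right; right.
    + by apply: Hn; rewrite En; apply/incat; left.
    + by rewrite /= Ep.
  - have -> : map snd (n1 ++ (p.1 + q.1, p.2) :: n2) = map snd n.
      by rewrite En !map_cat.
    exact: Hnd.
  - rewrite lcV_cat /= -Hlc En lcV_cat /= -Ep scalerDl.
    exact: ac4.
  - move=> b; rewrite coef_cat /= -Hc En coef_cat /= -Ep.
    by case: excluded_middle_informative => ? /=; [exact: ac4 | rewrite !add0r].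
exists (q :: n); split; last split; last split.
- by move=> r [<-|hr]; [|apply: Hn].
- by constructor.
- by rewrite /= Hlc.
- by move=> b /=; rewrite Hc.
Qed.

Lemma zero_coef l b : (forall p, List.In p l -> B p.2) -> lc l = 0 -> coef b l = 0.
Proof.
move=> Hl Hz; have [n [Hn [Hnd [Hlc Hc]]]] := @normalize l Hl.
rewrite -Hc; have H0 := Hind n Hnd Hn (etrans Hlc Hz).
elim: n {Hn Hnd Hlc Hc} H0 => [|p n IH] //= H0.
rewrite IH; last by move=> r hr; apply: H0; right.
have -> : p.1 = 0 by apply: H0; left.
by case: excluded_middle_informative => ? /=; rewrite addr0.
Qed.

Lemma coef_unique l1 l2 b : (forall p, List.In p l1 -> B p.2) ->
  (forall p, List.In p l2 -> B p.2) -> lc l1 = lc l2 -> coef b l1 = coef b l2.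
Proof.
move=> H1 H2 E.
have HB : forall p, List.In p (l1 ++ map (fun p => (-1 * p.1, p.2)) l2) -> B p.2.
  move=> p hp0; case: (proj1 incat hp0) => [hp|hp]; first exact: H1.
  have [r [Er hr]] := inmapP hp; rewrite -Er; exact: (H2 r hr).
have := @zero_coef _ b HB.
rewrite coef_cat coef_scale lcV_cat lcV_scale E scaleN1r subrr mulN1r.
by move=> /(_ erefl) /eqP; rewrite subr_eq0 => /eqP.
Qed.

Definition rep (x : V) := proj1_sig (constructive_indefinite_description _ (Hspan x)).
Lemma repP x : (forall p, List.In p (rep x) -> B p.2) /\ x = lc (rep x).
Proof. exact: proj2_sig (constructive_indefinite_description _ (Hspan x)). Qed.

Lemma coord b : exists phi : V -> K,
  (forall x y, phi (x + y) = phi x + phi y) /\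
  (forall k x, phi (k *: x) = k * phi x) /\
  (B b -> phi b = 1) /\ (forall b', B b' -> b' <> b -> phi b' = 0).
Proof.
pose phi x := coef b (rep x).
have phiE l x : (forall p, List.In p l -> B p.2) -> x = lc l -> phi x = coef b l.
  move=> Hl ->; have [H1 H2] := repP (lc l).
  exact: coef_unique.
have Hr x : (forall p, List.In p (rep x) -> B p.2) := proj1 (repP x).
have Er x : x = lc (rep x) := proj2 (repP x).
exists phi; split; last split; last split.
- move=> x y; rewrite (@phiE (rep x ++ rep y)) ?coef_cat //.
    by move=> p hp0; case: (proj1 incat hp0) => ?; [apply: (Hr x)|apply: (Hr y)].
  by rewrite lcV_cat -!Er.
- move=> k x; rewrite (@phiE (map (fun p => (k * p.1, p.2)) (rep x))) ?coef_scale //.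
    by move=> p hp; have [r [<- hr]] := inmapP hp; exact: (Hr x r hr).
  by rewrite lcV_scale -Er.
- move=> Bb; rewrite (@phiE [:: (1, b)]) /=; last by rewrite addr0 scale1r.
    by case: excluded_middle_informative => // ?; rewrite addr0.
  by move=> p [<-|].
- move=> b' Bb' ne; rewrite (@phiE [:: (1, b')]) /=; last by rewrite addr0 scale1r.
    by case: excluded_middle_informative => // ?; rewrite addr0.
  by move=> p [<-|].
Qed.
End Coord.

Section Prod.
Set Implicit Arguments.
Unset Strict Implicit.
Variables (K : fieldType) (I : Type) (A : I -> kalgebra K).
Local Notation Pt := (Pt A).
Local Notation P0 := (@P0 K I A).
Local Notation P1 := (@P1 K I A).
Local Notation Padd := (@Defs.Padd K I A).
Local Notation Pscale := (@Defs.Pscale K I A).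
Local Notation Pmul := (@Defs.Pmul K I A).
Implicit Types x y z : Pt.
Local Notation Plc := (@lincomb K Pt P0 Padd Pscale).

Lemma Peq (x y : Pt) : (forall i, x i = y i) -> x = y.
Proof. exact: functional_extensionality_dep. Qed.

Lemma Plc_cat l1 l2 : Plc (l1 ++ l2) = Padd (Plc l1) (Plc l2).
Proof.
apply: lc_cat => *; apply: Peq => i; rewrite /Padd /P0 ?addrA ?add0r //.
Qed.

Lemma Plc_scale k l : Plc (map (fun p => (k * p.1, p.2)) l) = Pscale k (Plc l).
Proof.
apply: lc_scale => *; apply: Peq => i; rewrite /Padd /Pscale /P0.
- by rewrite scalerDr.
- by rewrite scalerA.
- by rewrite scaler0.
Qed.

Lemma ka_mul0l (B : kalgebra K) (x : B) : ka_mul 0 x = 0.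
Proof. by apply: (addrI (ka_mul 0 x)); rewrite -ka_mulDl !addr0. Qed.
Lemma ka_mul0r (B : kalgebra K) (x : B) : ka_mul x 0 = 0.
Proof. by apply: (addrI (ka_mul x 0)); rewrite -ka_mulDr !addr0. Qed.

Definition ej (i : I) (a : A i) : Pt := fun j =>
  match excluded_middle_informative (i = j) with
  | left h => eq_rect i (fun k => (A k : Type)) a j h
  | right _ => 0
  end.

Arguments ej {i} a.

Lemma ej_at i (a : A i) : ej a i = a.
Proof.
rewrite /ej; case: excluded_middle_informative => [h|] //.
by rewrite -eq_rect_eq.
Qed.

Lemma ej_off i j (a : A i) : i <> j -> ej a j = 0.
Proof. by rewrite /ej; case: excluded_middle_informative. Qed.

Arguments ej_off {i j} a _.

Lemma ej_add i (a b : A i) : ej (a + b) = Padd (ej a) (ej b).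
Proof.
apply: Peq => j; rewrite /Padd /ej; case: excluded_middle_informative => [h|_].
  by case: j / h.
by rewrite addr0.
Qed.

Lemma ej_scale i k (a : A i) : ej (k *: a) = Pscale k (ej a).
Proof.
apply: Peq => j; rewrite /Pscale /ej; case: excluded_middle_informative => [h|_].
  by case: j / h.
by rewrite scaler0.
Qed.

Lemma ej0 i : ej (0 : A i) = P0.
Proof.
apply: Peq => j; rewrite /P0 /ej; case: excluded_middle_informative => [h|_] //.
by case: j / h.
Qed.

Lemma Pmul_ej i (a b : A i) : Pmul (ej a) (ej b) = ej (ka_mul a b).
Proof.
apply: Peq => j; rewrite /Pmul /ej; case: excluded_middle_informative => [h|_].
  by case: j / h.
by rewrite ka_mul0l.
Qed.

Lemma Pmul_ej_diff i i' (a : A i) (b : A i') : i <> i' -> Pmul (ej a) (ej b) = P0.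
Proof.
move=> ne; apply: Peq => j; rewrite /Pmul /P0.
case: (classic (i = j)) => [e|n1]; last by rewrite ej_off // ka_mul0l.
have n2 : i' <> j by move=> e'; apply: ne; rewrite e e'.
by rewrite (ej_off b n2) ka_mul0r.
Qed.

Lemma PmulDl x y z : Pmul (Padd x y) z = Padd (Pmul x z) (Pmul y z).
Proof. by apply: Peq => j; rewrite /Pmul /Padd ka_mulDl. Qed.
Lemma PmulDr x y z : Pmul x (Padd y z) = Padd (Pmul x y) (Pmul x z).
Proof. by apply: Peq => j; rewrite /Pmul /Padd ka_mulDr. Qed.
Lemma Pmul1l x : Pmul P1 x = x.
Proof. by apply: Peq => j; rewrite /Pmul /P1 ka_mul1l. Qed.
Lemma Pmul1r x : Pmul x P1 = x.
Proof. by apply: Peq => j; rewrite /Pmul /P1 ka_mul1r. Qed.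
Lemma Padd0l x : Padd P0 x = x.
Proof. by apply: Peq => j; rewrite /Padd /P0 add0r. Qed.
Lemma Padd0r x : Padd x P0 = x.
Proof. by apply: Peq => j; rewrite /Padd /P0 addr0. Qed.

Lemma dsum_ej i (a : A i) : in_dsum (ej a).
Proof. by exists [:: i] => j hj; apply: ej_off => e; apply: hj; left. Qed.
Lemma dsum0 : in_dsum P0.
Proof. by exists [::]. Qed.
Lemma dsum_add x y : in_dsum x -> in_dsum y -> in_dsum (Padd x y).
Proof.
move=> [s1 H1] [s2 H2]; exists (s1 ++ s2) => j hj.
rewrite /Padd H1 ?H2 ?addr0 // => h; apply: hj; apply/incat; by [right|left].
Qed.
Lemma dsum_scale k x : in_dsum x -> in_dsum (Pscale k x).
Proof. by move=> [s H]; exists s => j hj; rewrite /Pscale H // scaler0. Qed.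

Lemma Rk_dsum x : in_dsum x -> in_Rk x.
Proof.
move=> h; exists x, 0; split=> //; apply: Peq => j.
by rewrite /Padd /Pscale scale0r addr0.
Qed.
Lemma Rk0 : in_Rk P0.
Proof. exact: Rk_dsum dsum0. Qed.
Lemma Rk1 : in_Rk P1.
Proof.
exists P0, 1; split; first exact: dsum0.
by apply: Peq => j; rewrite /Padd /Pscale /P0 scale1r add0r.
Qed.
Lemma Rk_add x y : in_Rk x -> in_Rk y -> in_Rk (Padd x y).
Proof.
move=> [y1 [c1 [h1 ->]]] [y2 [c2 [h2 ->]]].
exists (Padd y1 y2), (c1 + c2); split; first exact: dsum_add.
by apply: Peq => j; rewrite /Padd /Pscale scalerDl addrACA.
Qed.
Lemma Rk_scale k x : in_Rk x -> in_Rk (Pscale k x).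
Proof.
move=> [y1 [c1 [h1 ->]]]; exists (Pscale k y1), (k * c1); split.
  exact: dsum_scale.
by apply: Peq => j; rewrite /Padd /Pscale scalerDr scalerA.
Qed.

Definition psi1_pred (x : Pt) (c : K) :=
  exists y, in_dsum y /\ x = Padd y (Pscale c P1) /\ (in_dsum P1 -> c = 0).
Definition psi1 (x : Pt) : K := epsilon (inhabits 0) (psi1_pred x).

Lemma psi1P x : in_Rk x -> exists y, in_dsum y /\
  x = Padd y (Pscale (psi1 x) P1) /\ (in_dsum P1 -> psi1 x = 0).
Proof.
move=> [y [c [hy Ex]]].
suff : psi1_pred x (psi1 x) by [].
apply: epsilon_spec; rewrite Ex.
case: (classic (in_dsum P1)) => h1.
  exists 0, (Padd y (Pscale c P1)); split; first by apply: dsum_add => //; apply: dsum_scale.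
  split=> //; apply: Peq => j; by rewrite /Padd /Pscale scale0r addr0.
by exists c, y.
Qed.

Lemma psi1_uniq x y c : ~ in_dsum P1 -> in_dsum y -> x = Padd y (Pscale c P1) ->
  psi1 x = c.
Proof.
move=> n1 hy E.
have [y' [hy' [E' _]]] : exists y, in_dsum y /\
  x = Padd y (Pscale (psi1 x) P1) /\ (in_dsum P1 -> psi1 x = 0).
  by apply: psi1P; rewrite E; apply: Rk_add; [exact: Rk_dsum | apply: Rk_scale; exact: Rk1].
case: (classic (psi1 x = c)) => // ne; exfalso; apply: n1.
move: hy hy' => [s H] [s' H']; exists (s ++ s') => j hj.
have hs : ~ List.In j s by move=> h; apply: hj; apply/incat; left.
have hs' : ~ List.In j s' by move=> h; apply: hj; apply/incat; right.
have := congr1 (fun f : Pt => f j) (etrans (esym E) E').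
rewrite /Padd /Pscale H // H' // !add0r => /eqP.
rewrite -subr_eq0 -scalerBl scaler_eq0 subr_eq0 => /orP [/eqP e|/eqP //].
by exfalso; apply: ne.
Qed.

Lemma psi1_dsum x : in_dsum x -> psi1 x = 0.
Proof.
move=> h; case: (classic (in_dsum P1)) => h1.
  by have [_ [_ [_ ->]]] := psi1P (Rk_dsum h).
by apply: (psi1_uniq h1 h); apply: Peq => j; rewrite /Padd /Pscale scale0r addr0.
Qed.

Lemma psi1_one : ~ in_dsum P1 -> psi1 P1 = 1.
Proof.
move=> h1; apply: (psi1_uniq h1 dsum0).
by apply: Peq => j; rewrite /Padd /Pscale /P0 scale1r add0r.
Qed.

Lemma psi1_add x y : in_Rk x -> in_Rk y -> psi1 (Padd x y) = psi1 x + psi1 y.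
Proof.
move=> hx hy; have [x' [hx' [Ex Zx]]] := psi1P hx.
have [y' [hy' [Ey Zy]]] := psi1P hy.
case: (classic (in_dsum P1)) => h1.
  have [_ [_ [_ E0]]] := psi1P (Rk_add hx hy).
  by rewrite E0 // Zx // Zy // addr0.
apply: (psi1_uniq h1 (dsum_add hx' hy')).
rewrite {1}Ex {1}Ey; apply: Peq => j.
by rewrite /Padd /Pscale scalerDl addrACA.
Qed.

Lemma psi1_scale k x : in_Rk x -> psi1 (Pscale k x) = k * psi1 x.
Proof.
move=> hx; have [x' [hx' [Ex Zx]]] := psi1P hx.
case: (classic (in_dsum P1)) => h1.
  have [_ [_ [_ E0]]] := psi1P (Rk_scale k hx).
  by rewrite E0 // Zx // mulr0.
apply: (psi1_uniq h1 (dsum_scale k hx')).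
rewrite {1}Ex; apply: Peq => j.
by rewrite /Padd /Pscale scalerDr scalerA.
Qed.

Definition psiF i (phi : A i -> K) (x : Pt) : K :=
  phi (x i) - psi1 x * phi (ka_one (A i)).

Section PsiF.
Variables (i : I) (phi : A i -> K).
Hypotheses (phiD : forall a b : A i, phi (a + b) = phi a + phi b)
  (phiZ : forall k (a : A i), phi (k *: a) = k * phi a).
Lemma phi0 : phi 0 = 0.
Proof. by rewrite -(scale0r (0 : A i)) phiZ mul0r. Qed.
Lemma psiF0 : psiF phi P0 = 0.
Proof. rewrite /psiF (psi1_dsum dsum0) mul0r subr0; exact: phi0. Qed.
Lemma psiF_add x y : in_Rk x -> in_Rk y ->
  psiF phi (Padd x y) = psiF phi x + psiF phi y.
Proof.
move=> hx hy; rewrite /psiF psi1_add // /Padd phiD.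
by rewrite mulrDl opprD addrACA.
Qed.
Lemma psiF_scale k x : in_Rk x -> psiF phi (Pscale k x) = k * psiF phi x.
Proof.
move=> hx; rewrite /psiF psi1_scale // /Pscale phiZ.
by rewrite mulrBr mulrA.
Qed.
Lemma psiF_dsum x : in_dsum x -> psiF phi x = phi (x i).
Proof. by move=> h; rewrite /psiF psi1_dsum // mul0r subr0. Qed.
Lemma psiF_one : ~ in_dsum P1 -> psiF phi P1 = 0.
Proof. by move=> h; rewrite /psiF psi1_one // mul1r subrr. Qed.
End PsiF.

Definition span (B : Pt -> Prop) (x : Pt) :=
  exists l, (forall p, List.In p l -> B p.2) /\ x = Plc l.

Section Span.
Variable B : Pt -> Prop.
Lemma span0 : span B P0.
Proof. by exists [::]. Qed.
Lemma span_add x y : span B x -> span B y -> span B (Padd x y).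
Proof.
move=> [l1 [H1 ->]] [l2 [H2 ->]]; exists (l1 ++ l2); split; last by rewrite Plc_cat.
by move=> p /incat [] ?; [apply: H1 | apply: H2].
Qed.
Lemma span_scale k x : span B x -> span B (Pscale k x).
Proof.
move=> [l [H ->]]; exists (map (fun p => (k * p.1, p.2)) l); split; last by rewrite Plc_scale.
by move=> p hp; have [r [<- hr]] := inmapP hp; exact: (H r hr).
Qed.
Lemma span_gen x : B x -> span B x.
Proof.
move=> h; exists [:: (1, x)]; split; first by move=> p [<-|].
by apply: Peq => j; rewrite /= /Padd /Pscale /P0 scale1r addr0.
Qed.
End Span.

Section Gen.
Variable T : Pt -> Prop.
Hypotheses (T0 : T P0) (TD : forall x y, T x -> T y -> T (Padd x y))
  (TZ : forall k x, T x -> T (Pscale k x)).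

Lemma ej_span_gen i (Bi : A i -> Prop) :
  (forall x : A i, exists l, (forall p, List.In p l -> Bi p.2) /\
      x = lincomb 0 +%R *:%R l) ->
  (forall b, Bi b -> T (ej b)) -> forall a : A i, T (ej a).
Proof.
move=> Hsp Hb a; have [l [Hl ->]] := Hsp a.
elim: l Hl => [|p l IH] Hl /=; first by rewrite ej0.
rewrite ej_add ej_scale; apply: TD; last by apply: IH => q hq; apply: Hl; right.
by apply: TZ; apply: Hb; apply: Hl; left.
Qed.

Hypothesis Tej : forall i (a : A i), T (ej a).

Lemma dsum_in z : in_dsum z -> T z.
Proof.
move=> [s]; elim: s z => [|i s IH] z Hs.
  by have -> : z = P0 by apply: Peq => j; apply: Hs.
have -> : z = Padd (ej (z i)) (Padd z (Pscale (-1) (ej (z i)))).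
  by apply: Peq => j; rewrite /Padd /Pscale scaleN1r addrC subrK.
apply: TD; first exact: Tej.
apply: IH => j hj; rewrite /Padd /Pscale.
case: (classic (i = j)) => [<-|ne]; first by rewrite ej_at scaleN1r subrr.
by rewrite ej_off // Hs ?scaler0 ?addr0 // => -[|].
Qed.

Lemma Rk_in x : (~ in_dsum P1 -> T P1) -> in_Rk x -> T x.
Proof.
move=> T1 [y [c [hy ->]]].
case: (classic (in_dsum P1)) => h1.
  by apply: dsum_in; apply: dsum_add => //; apply: dsum_scale.
by apply: TD; [apply: dsum_in | apply: TZ; apply: T1].
Qed.
End Gen.

End Prod.

Lemma Pindep (K : fieldType) (I : Type) (A : I -> kalgebra K)
  (B : Pt A -> Prop) (psi : Pt A -> K) (l : seq (K * Pt A)) (p : K * Pt A) :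
  (forall x, B x -> in_Rk x) -> psi (@P0 K I A) = 0 ->
  (forall x y, in_Rk x -> in_Rk y -> psi (@Padd K I A x y) = psi x + psi y) ->
  (forall k x, in_Rk x -> psi (@Pscale K I A k x) = k * psi x) ->
  (forall q, List.In q l -> B q.2) ->
  lincomb (@P0 K I A) (@Padd K I A) (@Pscale K I A) l = @P0 K I A ->
  List.NoDup (map snd l) -> List.In p l -> psi p.2 = 1 ->
  (forall q, List.In q l -> q.2 <> p.2 -> q.1 * psi q.2 = 0) -> p.1 = 0.
Proof.
move=> HBR p0 pD pZ Hl Hz Hnd Hin H1 Hq.
have S0 : in_Rk (@P0 K I A) by exact: Rk0.
have SD : forall x y : Pt A, in_Rk x -> in_Rk y -> in_Rk (Padd x y) by move=> *; apply: Rk_add.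
have SZ : forall k (x : Pt A), in_Rk x -> in_Rk (Pscale k x) by move=> *; apply: Rk_scale.
have HlS : forall q, List.In q l -> in_Rk q.2 by move=> q hq; apply: HBR; apply: Hl.
have := (@indep_crit K (Pt A) (@P0 K I A) (@Padd K I A) (@Pscale K I A) (@in_Rk K I A) psi l p
  S0 SD SZ p0 pD pZ HlS Hz Hnd Hin H1 Hq). exact.
Qed.

Theorem lemma5p8 (K : fieldType) (I : Type) (i0 : I)
    (A : I -> kalgebra K) :
  infinite_type I ->
  (forall i, has_mult_basis (A i)) ->
  Rk_has_mult_basis A /\
  ((exists B : A i0 -> Prop,
      is_strong_multiplicative_basis_of 0 +%R *:%R (@ka_mul K (A i0))
        (fun _ => True) B /\
      exists e, B e /\ ka_mul e e = e /\ e <> 0) ->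
   Rk_has_strong_mult_basis A).
Proof.
move=> _ H.
pose Bs i := proj1_sig (constructive_indefinite_description _ (H i)).
have HBs i : is_multiplicative_basis_of 0 +%R *:%R (@ka_mul K (A i))
    (fun _ => True) (Bs i).
  exact: proj2_sig (constructive_indefinite_description _ (H i)).
have coordA : forall i (Bi : A i -> Prop),
    is_basis_of 0 +%R *:%R (fun _ => True) Bi -> forall b, exists phi : A i -> K,
  (forall x y, phi (x + y) = phi x + phi y) /\
  (forall k x, phi (k *: x) = k * phi x) /\
  (Bi b -> phi b = 1) /\ (forall b', Bi b' -> b' <> b -> phi b' = 0).
  move=> i Bi [_ Hind Hsp] b.
  exact: (@coord K (A i) Bi Hind (fun x => Hsp x Logic.I) b).
have spanA : forall i (Bi : A i -> Prop),
    is_basis_of 0 +%R *:%R (fun _ => True) Bi -> forall x : A i,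
    exists l, (forall p, List.In p l -> Bi p.2) /\ x = lincomb 0 +%R *:%R l.
  by move=> i Bi [_ _ Hsp] x; apply: Hsp.
split.
  pose E := fun x : Pt A => (exists i (b : A i), Bs i b /\ x = ej b) \/
                          (~ in_dsum (@P1 K I A) /\ x = @P1 K I A).
  have ER : forall x, E x -> in_Rk x.
    by move=> x [[i [b [_ ->]]]|[_ ->]]; [exact: Rk_dsum (dsum_ej b) | exact: Rk1].
  exists E; split; first split.
  - exact: ER.
  - move=> l Hnd Hl Hz p Hp.
    case: (Hl p Hp) => [[i [b [Bb Eb]]]|[n1 E1]].
    + have [[_ _ _] _] := HBs i.
      have [phi [phiD [phiZ [phib phib']]]] := coordA i (Bs i) (proj1 (HBs i)) b.
      apply: (@Pindep K I A E (psiF phi) l p ER) => //.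
      * exact: psiF0.
      * by move=> x y hx hy; apply: psiF_add.
      * by move=> k x hx; apply: psiF_scale.
      * rewrite Eb (psiF_dsum phi (dsum_ej b)) ej_at; exact: phib.
      move=> q hq ne; case: (Hl q hq) => [[i' [b' [Bb' Eb']]]|[n1' E2]].
        rewrite Eb' (psiF_dsum phi (dsum_ej b')).
        case: (classic (i' = i)) => [ei|ni].
          subst i'; rewrite ej_at (phib' b' Bb') ?mulr0 //.
          by move=> eb; apply: ne; rewrite Eb Eb' eb.
        by rewrite (ej_off b' ni) (phi0 phiZ) mulr0.
      by rewrite E2 (psiF_one phi n1') mulr0.
    + apply: (@Pindep K I A E (@psi1 K I A) l p ER) => //.
      * exact: (psi1_dsum (@dsum0 K I A)).
      * by move=> x y hx hy; apply: psi1_add.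
      * by move=> k x hx; apply: psi1_scale.
      * by rewrite E1 psi1_one.
      move=> q hq ne; case: (Hl q hq) => [[i' [b' [Bb' Eb']]]|[_ E2]].
        by rewrite Eb' (psi1_dsum (dsum_ej b')) mulr0.
      by exfalso; apply: ne; rewrite E1 E2.
  - move=> x hx; apply: (Rk_in (T := span E)).
    + exact: span0.
    + by move=> *; apply: span_add.
    + by move=> *; apply: span_scale.
    + move=> i a; apply: (ej_span_gen (T := span E) _ _ _ (spanA i (Bs i) (proj1 (HBs i)))).
      * exact: span0.
      * by move=> *; apply: span_add.
      * by move=> *; apply: span_scale.
      * by move=> b Bb; apply: span_gen; left; exists i, b.
    + by move=> n1; apply: span_gen; right.
    + exact: hx.
  - move=> x y [[i [b [Bb ->]]]|[n1 ->]] [[i' [b' [Bb' ->]]]|[n1' ->]].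
    + case: (classic (i = i')) => [ei|ni].
        subst i'; rewrite Pmul_ej.
        have [_ Hm] := HBs i.
        case: (Hm b b' Bb Bb') => [->|Bbb]; first by left; rewrite ej0.
        by right; left; exists i, (ka_mul b b').
      by left; apply: Pmul_ej_diff.
    + by right; rewrite Pmul1r; left; exists i, b.
    + by right; rewrite Pmul1l; left; exists i', b'.
    + by right; rewrite Pmul1l; right.
move=> [B0 [[[HB0r HB0i HB0s] HB0m] [e [Be [ee ne0]]]]].
have HB0 : is_basis_of 0 +%R *:%R (fun _ => True) B0 by split.
pose S := fun x : Pt A =>
  (exists c : A i0, B0 c /\ x = ej c) \/
  (exists j (b : A j), j <> i0 /\ Bs j b /\ x = Padd (ej e) (ej b)) \/
  (~ in_dsum (@P1 K I A) /\ x = @P1 K I A).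
have SR : forall x, S x -> in_Rk x.
  move=> x [[c [_ ->]]|[[j [b [_ [_ ->]]]]|[_ ->]]].
  - exact: Rk_dsum (dsum_ej c).
  - exact: Rk_dsum (dsum_add (dsum_ej e) (dsum_ej b)).
  - exact: Rk1.
have glued_dsum : forall j (b : A j), in_dsum (Padd (ej e) (ej b)).
  by move=> j b; apply: dsum_add; apply: dsum_ej.
exists S; split; first split.
- exact: SR.
- move=> l Hnd Hl Hz.
  have ph1 : forall p, List.In p l -> ~ in_dsum (@P1 K I A) -> p.2 = @P1 K I A -> p.1 = 0.
    move=> p Hp n1 E1.
    apply: (@Pindep K I A S (@psi1 K I A) l p SR) => //.
    * exact: (psi1_dsum (@dsum0 K I A)).
    * by move=> x y hx hy; apply: psi1_add.
    * by move=> k x hx; apply: psi1_scale.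
    * by rewrite E1 psi1_one.
    move=> q hq ne; case: (Hl q hq) => [[c [_ Ec]]|[[j [b [_ [_ Eg]]]]|[_ E2]]].
    + by rewrite Ec (psi1_dsum (dsum_ej c)) mulr0.
    + by rewrite Eg (psi1_dsum (glued_dsum j b)) mulr0.
    + by exfalso; apply: ne; rewrite E1 E2.
  have ph2 : forall p, List.In p l -> forall j (b : A j), j <> i0 -> Bs j b ->
      p.2 = Padd (ej e) (ej b) -> p.1 = 0.
    move=> p Hp j b nj Bb Eg.
    have [phi [phiD [phiZ [phib phib']]]] := coordA j (Bs j) (proj1 (HBs j)) b.
    apply: (@Pindep K I A S (psiF phi) l p SR) => //.
    * exact: psiF0.
    * by move=> x y hx hy; apply: psiF_add.
    * by move=> k x hx; apply: psiF_scale.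
    * rewrite Eg (psiF_dsum phi (glued_dsum j b)) /Padd ej_at.
      by rewrite (ej_off e (nesym nj)) add0r; exact: phib.
    move=> q hq ne; case: (Hl q hq) => [[c [_ Ec]]|[[j' [b' [nj' [Bb' Eg']]]]|[n1 E2]]].
    + rewrite Ec (psiF_dsum phi (dsum_ej c)) (ej_off c (nesym nj)).
      by rewrite (phi0 phiZ) mulr0.
    + rewrite Eg' (psiF_dsum phi (glued_dsum j' b')) /Padd (ej_off e (nesym nj)) add0r.
      case: (classic (j' = j)) => [ej'|nj''].
        subst j'; rewrite ej_at (phib' b' Bb') ?mulr0 //.
        by move=> eb; apply: ne; rewrite Eg Eg' eb.
      by rewrite (ej_off b' nj'') (phi0 phiZ) mulr0.
    + by rewrite E2 (psiF_one phi n1) mulr0.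
  move=> p Hp; case: (Hl p Hp) => [[c [Bc Ec]]|[[j [b [nj [Bb Eg]]]]|[n1 E1]]].
  + have [phi [phiD [phiZ [phib phib']]]] := coordA i0 B0 HB0 c.
    apply: (@Pindep K I A S (psiF phi) l p SR) => //.
    * exact: psiF0.
    * by move=> x y hx hy; apply: psiF_add.
    * by move=> k x hx; apply: psiF_scale.
    * rewrite Ec (psiF_dsum phi (dsum_ej c)) ej_at; exact: phib.
    move=> q hq ne; case: (Hl q hq) => [[c' [Bc' Ec']]|[[j [b [nj [Bb Eg]]]]|[n1 E2]]].
    + rewrite Ec' (psiF_dsum phi (dsum_ej c')) ej_at (phib' c' Bc') ?mulr0 //.
      by move=> eb; apply: ne; rewrite Ec Ec' eb.
    + by rewrite (ph2 q hq j b nj Bb Eg) mul0r.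
    + by rewrite E2 (psiF_one phi n1) mulr0.
  + exact: (ph2 p Hp j b nj Bb Eg).
  + exact: (ph1 p Hp n1 E1).
- move=> x hx; apply: (Rk_in (T := span S)).
  + exact: span0.
  + by move=> *; apply: span_add.
  + by move=> *; apply: span_scale.
  + move=> i a; case: (classic (i = i0)) => [ei|ni].
      subst i.
      apply: (ej_span_gen (T := span S) _ _ _ (spanA i0 B0 HB0)).
      * exact: span0.
      * by move=> *; apply: span_add.
      * by move=> *; apply: span_scale.
      * by move=> c Bc; apply: span_gen; left; exists c.
    apply: (ej_span_gen (T := span S) _ _ _ (spanA i (Bs i) (proj1 (HBs i)))).
    * exact: span0.
    * by move=> *; apply: span_add.
    * by move=> *; apply: span_scale.
    * move=> b Bb.
      have -> : ej b = Padd (Padd (ej e) (ej b)) (Pscale (-1) (ej e)).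
        by apply: Peq => j; rewrite /Padd /Pscale scaleN1r addrC addKr.
      apply: span_add; first by apply: span_gen; right; left; exists i, b.
      by apply: span_scale; apply: span_gen; left; exists e.
  + by move=> n1; apply: span_gen; right; right.
  + exact: hx.
- have Pe : S (ej e) by left; exists e.
  have mul_c_g : forall (c : A i0) j (b : A j), j <> i0 ->
      Pmul (ej c) (Padd (ej e) (ej b)) = ej (ka_mul c e).
    move=> c j b nj; rewrite PmulDr Pmul_ej (Pmul_ej_diff c b (nesym nj)).
    exact: Padd0r.
  have mul_g_c : forall (c : A i0) j (b : A j), j <> i0 ->
      Pmul (Padd (ej e) (ej b)) (ej c) = ej (ka_mul e c).
    move=> c j b nj; rewrite PmulDl Pmul_ej (Pmul_ej_diff b c nj).
    exact: Padd0r.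
  move=> x y [[c [Bc ->]]|[[j [b [nj [Bb ->]]]]|[n1 ->]]]
    [[c' [Bc' ->]]|[[j' [b' [nj' [Bb' ->]]]]|[n1' ->]]].
  + by rewrite Pmul_ej; left; exists (ka_mul c c'); split => //; apply: HB0m.
  + by rewrite mul_c_g //; left; exists (ka_mul c e); split => //; apply: HB0m.
  + by rewrite Pmul1r; left; exists c.
  + by rewrite mul_g_c //; left; exists (ka_mul e c'); split => //; apply: HB0m.
  + rewrite PmulDl !PmulDr !Pmul_ej ee (Pmul_ej_diff e b' (nesym nj'))
      (Pmul_ej_diff b e nj) Padd0r Padd0l.
    case: (classic (j = j')) => [ej'|nj''].
      subst j'; rewrite Pmul_ej.
      have [_ Hm] := HBs j.
      case: (Hm b b' Bb Bb') => [->|Bbb]; first by rewrite ej0 Padd0r.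
      by right; left; exists j, (ka_mul b b').
    by rewrite (Pmul_ej_diff b b' nj'') Padd0r.
  + by rewrite Pmul1r; right; left; exists j, b.
  + by rewrite Pmul1l; left; exists c'.
  + by rewrite Pmul1l; right; left; exists j', b'.
  + by rewrite Pmul1l; right; right.
Qed.
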